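(* For every integer $m\ge1$ the following identities hold: $$\sum_{k=0}^{m}\frac{\binom{m}{k}\binom{m}{k}}{\binom{2m}{2k}}=\frac{(2m)!!}{(2m-1)!!}=4^m\frac{(m!)^2}{(2m)!},$$ $$\sum_{k=0}^{m}\frac{\binom{m}{k}\binom{m}{k+1}}{\binom{2m}{2k}}=2m+1-\frac{(2m)!!}{(2m-1)!!},$$ $$\sum_{k=0}^{m}\frac{\binom{m}{k}\binom{m+1}{k+1}}{\binom{2m}{2k}}=2m+1.$$
   Context: Convention: $\binom{m}{m+1}=0$, $\binom{m}{0}=1$. $(2m)!!=2\cdot4\cdots(2m)$, $(2m-1)!!=1\cdot3\cdots(2m-1)$. *)

(* Defs.v *)
From HB Require Import structures.
From mathcomp Require Import all_boot all_order all_algebra.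
Set Implicit Arguments. Unset Strict Implicit. Unset Printing Implicit Defensive.

(* (2m)!! = 2*4*...*(2m) ; (2m-1)!! = 1*3*...*(2m-1) (empty products = 1) *)
Definition even_dfact (m : nat) : nat := \prod_(1 <= i < m.+1) (2 * i).
Definition odd_dfact (m : nat) : nat := \prod_(1 <= i < m.+1) (2 * i - 1).

(* Main.v *)
Require Import Defs.
From HB Require Import structures.
From mathcomp Require Import all_boot all_order all_algebra.
From mathcomp Require Import ring lra zify.
Import Order.TTheory GRing.Theory Num.Theory.
Local Open Scope ring_scope.

Definition G (m k : nat) : rat := ('C(m, k) * 'C(m.+1, k))%N%:R / ('C(2 * m, 2 * k))%:R.

Lemma gstep m n : (n < m)%N ->
  (n%:R * ((2 * m + 1)%N%:R - (2 * n)%N%:R) / (m.+1)%:R) * G m n + G m n =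
  (n.+1%:R * ((2 * m + 1)%N%:R - (2 * n.+1)%N%:R) / (m.+1)%:R) * G m n.+1.
Proof.
move=> /subnKC; set d := (m - n.+1)%N => hm.
have e1 : (n.+1 * 'C(m, n.+1) = d.+1 * 'C(m, n))%N by rewrite mul_bin_left; congr (_ * _)%N; lia.
have e2 : (n.+1 * 'C(m.+1, n.+1) = d.+2 * 'C(m.+1, n))%N by rewrite mul_bin_left; congr (_ * _)%N; lia.
have e3 : ((2 * n).+2 * 'C(2 * m, (2 * n).+2) = (2 * d).+1 * 'C(2 * m, (2 * n).+1))%N by rewrite mul_bin_left; congr (_ * _)%N; lia.
have e4 : ((2 * n).+1 * 'C(2 * m, (2 * n).+1) = (2 * d).+2 * 'C(2 * m, 2 * n))%N by rewrite mul_bin_left; congr (_ * _)%N; lia.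
have p1 : (0:rat) < ('C(m, n))%:R by rewrite ltr0n bin_gt0; lia.
have p2 : (0:rat) < ('C(m.+1, n))%:R by rewrite ltr0n bin_gt0; lia.
have p3 : (0:rat) < ('C(2 * m, 2 * n))%:R by rewrite ltr0n bin_gt0; lia.
have p4 : (0:rat) < ('C(2 * m, (2 * n).+1))%:R by rewrite ltr0n bin_gt0; lia.
have p5 : (0:rat) < ('C(2 * m, (2 * n).+2))%:R by rewrite ltr0n bin_gt0; lia.
rewrite /G (_ : (2 * n.+1 = (2 * n).+2)%N); last by lia.
move: e1 e2 e3 e4 p1 p2 p3 p4 p5.
move: (binomial m n.+1) (binomial m.+1 n.+1) (binomial (2 * m) (2 * n).+2) (binomial (2 * m) (2 * n).+1) (binomial m n) (binomial m.+1 n) (binomial (2 * m) (2 * n)) => a b c e x y z.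
clearbody d; subst m.
move=> /(congr1 (GRing.natmul (1:rat))) e1 /(congr1 (GRing.natmul (1:rat))) e2
  /(congr1 (GRing.natmul (1:rat))) e3 /(congr1 (GRing.natmul (1:rat))) e4.
move=> p1 p2 p3 p4 p5.
rewrite ?natrM ?natrD -?natr1 in e1 e2 e3 e4.
rewrite (_ : (2 * (n.+1 + d) + 1 = 2*n+2*d+3)%N); last by lia.
rewrite (_ : ((2*n).+2 = 2*n+2)%N); last by lia.
rewrite (_ : ((n.+1+d).+1 = n+d+2)%N); last by lia.
rewrite !natrM !natrD -!natr1.
have hn : (0:rat) <= n%:R by apply: ler0n.
have hd : (0:rat) <= d%:R by apply: ler0n.
have h2n : (0:rat) <= (2*n)%:R by apply: ler0n.
have h2d : (0:rat) <= (2*d)%:R by apply: ler0n.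
have -> : a%:R = ((d%:R + 1) * x%:R) / (n%:R + 1) :> rat.
  by rewrite -e1; field; lra.
have -> : b%:R = ((d%:R + 1 + 1) * y%:R) / (n%:R + 1) :> rat.
  by rewrite -e2; field; lra.
have -> : c%:R = ((2 * d)%:R + 1) * e%:R / ((2 * n)%:R + 1 + 1) :> rat.
  by rewrite -e3; field; lra.
have -> : e%:R = ((2 * d)%:R + 1 + 1) * z%:R / ((2 * n)%:R + 1) :> rat.
  by rewrite -e4; field; lra.
rewrite !natrM.
by field; repeat (apply/andP; split); apply/negP => /eqP; lra.
Qed.

Lemma gpart m n : (n <= m)%N -> \sum_(0 <= k < n) G m k =
  (n%:R * ((2 * m + 1)%N%:R - (2 * n)%N%:R) / (m.+1)%:R) * G m n.
Proof.
elim: n => [|n IH] hn; first by rewrite big_geq // !mul0r.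
by rewrite big_nat_recr //= IH ?(ltnW hn) // gstep.
Qed.

Lemma gtotal m : \sum_(0 <= k < m.+1) G m k = (2 * m + 1)%N%:R.
Proof.
rewrite big_nat_recr //= gpart // /G !binn binSn.
rewrite !natrD !natrM -natr1.
have := ler0n rat m => hm.
by field; apply/negP => /eqP; lra.
Qed.

Lemma t3 m : \sum_(0 <= k < m.+1) ('C(m, k) * 'C(m.+1, k.+1))%:R / ('C(2 * m, 2 * k))%:R = (2 * m + 1)%:R :> rat.
Proof.
rewrite -gtotal big_nat_rev /=; apply: eq_big_nat => k /andP [_ hk].
rewrite /G add0n subSS bin_sub; last by lia.
rewrite -subSn; last by lia.
rewrite bin_sub; last by lia.
rewrite mulnBr bin_sub; last by lia.
by rewrite mulnC.
Qed.

Lemma fstep m k : (k <= m)%N ->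
 (2 * m + 1)%:R * (('C(m.+1, k) * 'C(m.+1, k))%:R / ('C(2 * m.+1, 2 * k))%:R) =
 (2 * m + 2)%:R * (('C(m, k) * 'C(m, k))%:R / ('C(2 * m, 2 * k))%:R) - G m k :> rat.
Proof.
move=> /subnKC; set a := (m - k)%N => hm.
have e1 : (m.+1 * 'C(m, k) = a.+1 * 'C(m.+1, k))%N by rewrite (mul_bin_down m.+1 k); congr (_ * _)%N; lia.
have e2 : ((2 * m).+2 * 'C((2 * m).+1, 2 * k) = (2 * a).+2 * 'C((2 * m).+2, 2 * k))%N.
  by rewrite (mul_bin_down (2 * m).+2 (2 * k)); congr (_ * _)%N; lia.
have e3 : ((2 * m).+1 * 'C(2 * m, 2 * k) = (2 * a).+1 * 'C((2 * m).+1, 2 * k))%N.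
  by rewrite (mul_bin_down (2 * m).+1 (2 * k)); congr (_ * _)%N; lia.
have p1 : (0:rat) < ('C(m, k))%:R by rewrite ltr0n bin_gt0; lia.
have p3 : (0:rat) < ('C(2 * m, 2 * k))%:R by rewrite ltr0n bin_gt0; lia.
have p4 : (0:rat) < ('C((2 * m).+1, 2 * k))%:R by rewrite ltr0n bin_gt0; lia.
have p5 : (0:rat) < ('C((2 * m).+2, 2 * k))%:R by rewrite ltr0n bin_gt0; lia.
rewrite /G (_ : (2 * m.+1 = (2 * m).+2)%N); last by lia.
move: e1 e2 e3 p1 p3 p4 p5.
move: (binomial m.+1 k) (binomial m k) (binomial (2 * m) (2 * k)) (binomial (2 * m).+1 (2 * k)) (binomial (2 * m).+2 (2 * k)) => u x z w v.
clearbody a; subst m.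
move=> /(congr1 (GRing.natmul (1:rat))) e1 /(congr1 (GRing.natmul (1:rat))) e2
  /(congr1 (GRing.natmul (1:rat))) e3.
move=> p1 p3 p4 p5.
rewrite ?natrM ?natrD -?natr1 in e1 e2 e3.
have hk : (0:rat) <= k%:R by apply: ler0n.
have ha : (0:rat) <= a%:R by apply: ler0n.
have h2a : (0:rat) <= (2 * a)%:R by apply: ler0n.
have h2 : (0:rat) <= (2 * (k + a))%:R by apply: ler0n.
rewrite (natrM _ u u) (natrM _ x x) (natrM _ x u).
have -> : v%:R = ((2 * (k + a))%:R + 1 + 1) * w%:R / ((2 * a)%:R + 1 + 1) :> rat.
  by rewrite e2; field; lra.
have -> : w%:R = ((2 * (k + a))%:R + 1) * z%:R / ((2 * a)%:R + 1) :> rat.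
  by rewrite e3; field; lra.
have -> : u%:R = ((k + a)%:R + 1) * x%:R / (a%:R + 1) :> rat.
  by rewrite e1; field; lra.
rewrite !natrM !natrD.
by field; repeat (apply/andP; split); apply/negP => /eqP; lra.
Qed.

Definition S1 m : rat := \sum_(0 <= k < m.+1) ('C(m, k) * 'C(m, k))%:R / ('C(2 * m, 2 * k))%:R.

Lemma s1rec m : (2 * m + 1)%:R * S1 m.+1 = (2 * m + 2)%:R * S1 m.
Proof.
rewrite /S1 big_nat_recr //= !binn mulrDr mulr_sumr.
have -> : \sum_(0 <= i < m.+1) (2 * m + 1)%:R * (('C(m.+1, i) * 'C(m.+1, i))%:R / ('C(2 * m.+1, 2 * i))%:R)
  = \sum_(0 <= i < m.+1) ((2 * m + 2)%:R * (('C(m, i) * 'C(m, i))%:R / ('C(2 * m, 2 * i))%:R) - G m i) :> rat.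
  by apply: eq_big_nat => k /andP[_ hk]; apply: fstep; lia.
rewrite sumrB -mulr_sumr gtotal.
by rewrite (_ : ((1 * 1)%N%:R / 1 : rat) = 1) ?mulr1 ?subrK // divr1.
Qed.

Lemma s1closed m : S1 m = 4 ^+ m * ((m`!) ^ 2)%:R / ((2 * m)`!)%:R.
Proof.
elim: m => [|m IH].
  by rewrite /S1 big_nat1.
have hm := ler0n rat m.
have nz : (2 * m + 1)%:R != 0 :> rat by rewrite pnatr_eq0 addn1.
have -> : S1 m.+1 = (2 * m + 2)%:R * S1 m / (2 * m + 1)%:R.
  by rewrite -s1rec mulrAC divff // mul1r.
rewrite IH (_ : (2 * m.+1 = (2 * m).+2)%N); last by lia.
rewrite !factS expnMn !natrM ?natrX ?natrD ?natrM exprS.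
have f1 : (0:rat) < (m`!)%:R by rewrite ltr0n fact_gt0.
have f2 : (0:rat) < ((2 * m)`!)%:R by rewrite ltr0n fact_gt0.
rewrite -!natr1 ?natrM ?natrD.
by field; repeat (apply/andP; split); apply/negP => /eqP; lra.
Qed.

Lemma evenS m : even_dfact m.+1 = (even_dfact m * (2 * m.+1))%N.
Proof. by rewrite /even_dfact big_nat_recr. Qed.
Lemma oddS m : odd_dfact m.+1 = (odd_dfact m * (2 * m.+1 - 1))%N.
Proof. by rewrite /odd_dfact big_nat_recr. Qed.

Lemma evenE m : even_dfact m = (2 ^ m * m`!)%N.
Proof.
elim: m => [|m IH]; first by rewrite /even_dfact big_geq.
rewrite evenS IH factS expnS; lia.
Qed.

Lemma oddE m : (odd_dfact m * even_dfact m = (2 * m)`!)%N.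
Proof.
elim: m => [|m IH]; first by rewrite /even_dfact /odd_dfact !big_geq.
rewrite evenS oddS.
rewrite (_ : (2 * m.+1 = (2 * m).+2)%N); last by lia.
rewrite !factS -IH.
have -> : ((2 * m).+2 - 1 = (2 * m).+1)%N by lia.
lia.
Qed.

Lemma EO m : (even_dfact m)%:R / (odd_dfact m)%:R = 4 ^+ m * ((m`!) ^ 2)%:R / ((2 * m)`!)%:R :> rat.
Proof.
rewrite -oddE evenE !natrM !natrX.
have f1 : (0:rat) < (m`!)%:R by rewrite ltr0n fact_gt0.
have f2 : (0:rat) < (odd_dfact m)%:R.
  by rewrite ltr0n; have := fact_gt0 (2 * m); rewrite -oddE muln_gt0 => /andP[].
have f3 : (0:rat) < 2 ^+ m by apply: exprn_gt0.
rewrite (_ : (4:rat) ^+ m = 2 ^+ m * 2 ^+ m); last by rewrite -exprMn.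
by field; repeat (apply/andP; split); apply/negP => /eqP; nra.
Qed.

Theorem proposition5p1 (m : nat) (hm : (1 <= m)%N) :
  [/\ \sum_(0 <= k < m.+1) ('C(m, k) * 'C(m, k))%:R / ('C(2 * m, 2 * k))%:R
        = (even_dfact m)%:R / (odd_dfact m)%:R :> rat,
      (even_dfact m)%:R / (odd_dfact m)%:R
        = 4 ^+ m * ((m`!) ^ 2)%:R / ((2 * m)`!)%:R :> rat,
      \sum_(0 <= k < m.+1) ('C(m, k) * 'C(m, k.+1))%:R / ('C(2 * m, 2 * k))%:R
        = (2 * m + 1)%:R - (even_dfact m)%:R / (odd_dfact m)%:R :> rat
    & \sum_(0 <= k < m.+1) ('C(m, k) * 'C(m.+1, k.+1))%:R / ('C(2 * m, 2 * k))%:R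
        = (2 * m + 1)%:R :> rat].
Proof.
have h1 : S1 m = (even_dfact m)%:R / (odd_dfact m)%:R by rewrite s1closed EO.
split; [exact: h1 | exact: EO | | exact: t3].
rewrite -t3 -h1 /S1 -sumrB; apply: eq_bigr => k _.
by rewrite binS mulnDr natrD mulrDl addrK.
Qed.
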